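(* For every $A\in\mathsf{TNNIL}$: (1) $\mathsf{LLe}^+\vdash\boxdot A^l\leftrightarrow\boxdot A^\Box$; (2) $\mathsf{LLe}^+\vdash A^\Box\to A$; (3) if $A\in\mathsf{NOI}$ then $\mathsf{LLe}^+\vdash A^\Box\leftrightarrow A$; (4) $\mathsf{LLe}^+\vdash\Box A\leftrightarrow\Box A^\Box$.
   Context: Modal language: propositional variables, $\bot$, $\wedge,\vee,\to$, $\Box$; atomic = variables and $\bot$; $\boxdot A:=A\wedge\Box A$. $\mathsf{iGL}$: intuitionistic propositional logic in the modal language plus $\Box(A\to B)\to(\Box A\to\Box B)$, $\Box A\to\Box\Box A$, $\Box(\Box A\to A)\to\Box A$, closed under modus ponens and necessitation. $\mathsf{NOI}$: propositions in which every $\to$ is in the scope of a $\Box$. Leivant's translation: $A^l=A$ for atomic/boxed $A$; $(A\wedge B)^l=A^l\wedge B^l$; $(A\vee B)^l=\boxdot A^l\vee\boxdot B^l$; $(A\to B)^l=A\to B^l$ if $A\in\mathsf{NOI}$, else $A\to B$. $\mathsf{LLe}^+:=\mathsf{iGL}+\{\Box A\to\Box A^l\}+\{p\to\Box p: p\text{ atomic}\}$. $\mathsf{TNNIL}$: smallest class containing atomic propositions, closed under $\wedge,\vee,\Box$, and containing $A\to B$ whenever $A,B\in\mathsf{TNNIL}$ and $A\in\mathsf{NOI}$. Box-translation: $A^\Box:=A\wedge\Box A$ for atomic $A$; $(A\circ B)^\Box:=A^\Box\circ B^\Box$ for $\circ\in\{\wedge,\vee\}$; $(A\to B)^\Box:=(A^\Box\to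 B^\Box)\wedge\Box(A^\Box\to B^\Box)$; $(\Box A)^\Box:=\Box(A^\Box)$. *)

(* Defs.v *)
From Stdlib Require Import Bool.

Inductive form : Type :=
| Var : nat -> form
| Bot : form
| And : form -> form -> form
| Or  : form -> form -> form
| Imp : form -> form -> form
| Box : form -> form.

Definition Iff (A B : form) : form := And (Imp A B) (Imp B A).
Definition boxdot (A : form) : form := And A (Box A).

Definition atomic (A : form) : Prop :=
  match A with Var _ | Bot => True | _ => False end.

Fixpoint noi (A : form) : bool :=
  match A with
  | Var _ | Bot => true
  | And B C | Or B C => noi B && noi C
  | Imp _ _ => false
  | Box _ => true
  end.

Fixpoint lei (A : form) : form :=
  match A with
  | Var _ | Bot | Box _ => A
  | And B C => And (lei B) (lei C)
  | Or B C => Or (boxdot (lei B)) (boxdot (lei C))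
  | Imp B C => if noi B then Imp B (lei C) else Imp B C
  end.

Fixpoint boxt (A : form) : form :=
  match A with
  | Var _ | Bot => And A (Box A)
  | And B C => And (boxt B) (boxt C)
  | Or B C => Or (boxt B) (boxt C)
  | Imp B C => And (Imp (boxt B) (boxt C)) (Box (Imp (boxt B) (boxt C)))
  | Box B => Box (boxt B)
  end.

Inductive TNNIL : form -> Prop :=
| TN_var : forall n, TNNIL (Var n)
| TN_bot : TNNIL Bot
| TN_and : forall A B, TNNIL A -> TNNIL B -> TNNIL (And A B)
| TN_or  : forall A B, TNNIL A -> TNNIL B -> TNNIL (Or A B)
| TN_box : forall A, TNNIL A -> TNNIL (Box A)
| TN_imp : forall A B, TNNIL A -> TNNIL B -> noi A = true -> TNNIL (Imp A B).

Inductive LLe_plus : form -> Prop :=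
| ax_K1 : forall A B, LLe_plus (Imp A (Imp B A))
| ax_S  : forall A B C,
    LLe_plus (Imp (Imp A (Imp B C)) (Imp (Imp A B) (Imp A C)))
| ax_andE1 : forall A B, LLe_plus (Imp (And A B) A)
| ax_andE2 : forall A B, LLe_plus (Imp (And A B) B)
| ax_andI  : forall A B, LLe_plus (Imp A (Imp B (And A B)))
| ax_orI1  : forall A B, LLe_plus (Imp A (Or A B))
| ax_orI2  : forall A B, LLe_plus (Imp B (Or A B))
| ax_orE   : forall A B C,
    LLe_plus (Imp (Imp A C) (Imp (Imp B C) (Imp (Or A B) C)))
| ax_efq   : forall A, LLe_plus (Imp Bot A)
| ax_K   : forall A B, LLe_plus (Imp (Box (Imp A B)) (Imp (Box A) (Box B)))
| ax_4   : forall A, LLe_plus (Imp (Box A) (Box (Box A)))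
| ax_Lob : forall A, LLe_plus (Imp (Box (Imp (Box A) A)) (Box A))
| ax_Le  : forall A, LLe_plus (Imp (Box A) (Box (lei A)))
| ax_CPa : forall p, atomic p -> LLe_plus (Imp p (Box p))
| r_MP  : forall A B, LLe_plus (Imp A B) -> LLe_plus A -> LLe_plus B
| r_Nec : forall A, LLe_plus A -> LLe_plus (Box A).

(* Main.v *)
Require Import Defs.
From Stdlib Require Import List Bool.
Import ListNotations.

Inductive Der (G : list form) : form -> Prop :=
| d_thm : forall A, LLe_plus A -> Der G A
| d_hyp : forall A, In A G -> Der G A
| d_mp : forall A B, Der G (Imp A B) -> Der G A -> Der G B.

Lemma imp_id A : LLe_plus (Imp A A).
Proof.
  eapply r_MP. eapply r_MP. apply (ax_S A (Imp A A) A).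
  apply ax_K1. apply (ax_K1 A A).
Qed.

Lemma deduction G A B : Der (A :: G) B -> Der G (Imp A B).
Proof.
  intro H. remember (A :: G) as G'. induction H; subst.
  - eapply d_mp. eapply d_thm; eapply ax_K1. now apply d_thm.
  - destruct H as [<-|H]. eapply d_thm; eapply imp_id.
    eapply d_mp. eapply d_thm; eapply ax_K1. now apply d_hyp.
  - eapply d_mp. eapply d_mp. eapply d_thm; eapply ax_S. apply IHDer1; reflexivity. apply IHDer2; reflexivity.
Qed.

Lemma to_thm A : Der [] A -> LLe_plus A.
Proof.
  intro H. remember [] as G. induction H; subst; auto.
  - destruct H. - eapply r_MP; eauto.
Qed.

Lemma imp_from A B : Der [A] B -> LLe_plus (Imp A B).
Proof. intro; eapply to_thm; eapply deduction; auto. Qed.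

Lemma iff_from A B : Der [A] B -> Der [B] A -> LLe_plus (Iff A B).
Proof.
  intros H1 H2. apply imp_from in H1. apply imp_from in H2.
  eapply r_MP. eapply r_MP. apply ax_andI. auto. auto.
Qed.

Lemma iff1 A B : LLe_plus (Iff A B) -> LLe_plus (Imp A B).
Proof. intro H. eapply r_MP. apply ax_andE1. exact H. Qed.
Lemma iff2 A B : LLe_plus (Iff A B) -> LLe_plus (Imp B A).
Proof. intro H. eapply r_MP. apply ax_andE2. exact H. Qed.

Lemma app G A B : LLe_plus (Imp A B) -> Der G A -> Der G B.
Proof. intros; eapply d_mp; [apply d_thm|]; eauto. Qed.

Lemma h0 G A : Der (A :: G) A.
Proof. apply d_hyp; simpl; auto. Qed.
Lemma h1 G A B : Der (B :: A :: G) A.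
Proof. apply d_hyp; simpl; auto. Qed.

Lemma and_i G A B : Der G A -> Der G B -> Der G (And A B).
Proof. intros. eapply d_mp. eapply app. apply ax_andI. auto. auto. Qed.
Lemma and_1 G A B : Der G (And A B) -> Der G A.
Proof. eapply app; eapply ax_andE1. Qed.
Lemma and_2 G A B : Der G (And A B) -> Der G B.
Proof. eapply app; eapply ax_andE2. Qed.
Lemma or_1 G A B : Der G A -> Der G (Or A B).
Proof. eapply app; eapply ax_orI1. Qed.
Lemma or_2 G A B : Der G B -> Der G (Or A B).
Proof. eapply app; eapply ax_orI2. Qed.
Lemma or_e G A B C : Der G (Or A B) -> Der (A :: G) C -> Der (B :: G) C -> Der G C.
Proof.
  intros H HA HB. apply deduction in HA. apply deduction in HB.
  eapply d_mp. eapply d_mp. eapply app. apply ax_orE. exact HA. exact HB. exact H.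
Qed.
Lemma boxmono G A B : LLe_plus (Imp A B) -> Der G (Box A) -> Der G (Box B).
Proof. intros H. apply app. eapply r_MP. apply ax_K. eapply r_Nec; eapply H. Qed.
Lemma four G A : Der G (Box A) -> Der G (Box (Box A)).
Proof. eapply app; eapply ax_4. Qed.
Lemma box_and G A B : Der G (Box A) -> Der G (Box B) -> Der G (Box (And A B)).
Proof.
  intros HA HB. eapply d_mp. eapply app. apply ax_K.
  eapply boxmono. apply (ax_andI A B). exact HA. exact HB.
Qed.

Lemma boxt_box A : LLe_plus (Imp (boxt A) (Box (boxt A))).
Proof.
  induction A; simpl; apply imp_from.
  - apply box_and. eapply and_2; eapply h0. eapply four; eapply and_2; eapply h0.
  - apply box_and. eapply and_2; eapply h0. eapply four; eapply and_2; eapply h0.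
  - apply box_and. eapply (app _ _ _ IHA1); eapply and_1; eapply h0. eapply (app _ _ _ IHA2); eapply and_2; eapply h0.
  - eapply or_e. apply h0.
    + eapply boxmono. apply ax_orI1. eapply (app _ _ _ IHA1); eapply h0.
    + eapply boxmono. apply ax_orI2. eapply (app _ _ _ IHA2); eapply h0.
  - apply box_and. eapply and_2; eapply h0. eapply four; eapply and_2; eapply h0.
  - eapply four; eapply h0.
Qed.

Lemma bd G A : Der G (boxt A) -> Der G (boxdot (boxt A)).
Proof. intro H. apply and_i. exact H. eapply app. apply boxt_box. exact H. Qed.

Lemma L4 A : LLe_plus (Iff (boxdot (lei A)) (boxdot (boxt A))) ->
  LLe_plus (Imp (boxt A) A) -> LLe_plus (Iff (Box A) (Box (boxt A))).
Proof.
  intros H1 H2. apply iff_from.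
  - assert (Hl : Der [Box A] (Box (lei A))) by (eapply app; [apply ax_Le|apply h0]).
    eapply boxmono. apply ax_andE1. eapply boxmono. apply (iff1 _ _ H1).
    apply box_and. exact Hl. eapply four; eapply Hl.
  - eapply boxmono. exact H2. apply h0.
Qed.

Lemma atomic_case p : atomic p ->
  LLe_plus (Iff (boxdot p) (boxdot (And p (Box p)))) /\
  LLe_plus (Imp (And p (Box p)) p) /\
  LLe_plus (Iff (And p (Box p)) p).
Proof.
  intro Ha. split; [|split].
  - apply iff_from.
    + apply and_i. apply h0. apply box_and. eapply and_2; eapply h0. eapply four; eapply and_2; eapply h0.
    + eapply and_1; eapply h0.
  - eapply imp_from; eapply and_1; eapply h0.
  - apply iff_from. eapply and_1; eapply h0. apply and_i. apply h0. eapply app. eapply ax_CPa; eapply Ha. apply h0.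
Qed.

Lemma main A : TNNIL A ->
  LLe_plus (Iff (boxdot (lei A)) (boxdot (boxt A))) /\
  LLe_plus (Imp (boxt A) A) /\
  (noi A = true -> LLe_plus (Iff (boxt A) A)).
Proof.
  induction 1.
  - destruct (atomic_case (Var n) I) as (a & b & c). simpl. auto.
  - destruct (atomic_case Bot I) as (a & b & c). simpl. auto.
  - destruct IHTNNIL1 as (B1 & B2 & B3). destruct IHTNNIL2 as (C1 & C2 & C3).
    simpl. split; [|split].
    + apply iff_from.
      * assert (HB : Der [boxdot (And (lei A) (lei B))] (boxdot (boxt A))).
        { eapply app. apply (iff1 _ _ B1). apply and_i. eapply and_1; eapply and_1; eapply h0.
          eapply boxmono. apply ax_andE1. eapply and_2; eapply h0. }
        assert (HC : Der [boxdot (And (lei A) (lei B))] (boxdot (boxt B))).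
        { eapply app. apply (iff1 _ _ C1). apply and_i. eapply and_2; eapply and_1; eapply h0.
          eapply boxmono. apply ax_andE2. eapply and_2; eapply h0. }
        apply and_i. apply and_i. eapply and_1; eapply HB. eapply and_1; eapply HC.
        apply box_and. eapply and_2; eapply HB. eapply and_2; eapply HC.
      * assert (HB : Der [boxdot (And (boxt A) (boxt B))] (boxdot (lei A))).
        { eapply app. apply (iff2 _ _ B1). apply and_i. eapply and_1; eapply and_1; eapply h0.
          eapply boxmono. apply ax_andE1. eapply and_2; eapply h0. }
        assert (HC : Der [boxdot (And (boxt A) (boxt B))] (boxdot (lei B))).
        { eapply app. apply (iff2 _ _ C1). apply and_i. eapply and_2; eapply and_1; eapply h0.
          eapply boxmono. apply ax_andE2. eapply and_2; eapply h0. }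
        apply and_i. apply and_i. eapply and_1; eapply HB. eapply and_1; eapply HC.
        apply box_and. eapply and_2; eapply HB. eapply and_2; eapply HC.
    + apply imp_from. apply and_i. eapply app. apply B2. eapply and_1; eapply h0.
      eapply app. apply C2. eapply and_2; eapply h0.
    + intro Hn. apply andb_prop in Hn. destruct Hn as [Ha Hb].
      specialize (B3 Ha). specialize (C3 Hb). apply iff_from.
      * apply and_i. eapply app. apply (iff1 _ _ B3). eapply and_1; eapply h0.
        eapply app. apply (iff1 _ _ C3). eapply and_2; eapply h0.
      * apply and_i. eapply app. apply (iff2 _ _ B3). eapply and_1; eapply h0.
        eapply app. apply (iff2 _ _ C3). eapply and_2; eapply h0.
  - destruct IHTNNIL1 as (B1 & B2 & B3). destruct IHTNNIL2 as (C1 & C2 & C3).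
    simpl. split; [|split].
    + assert (T : LLe_plus (Imp (Or (boxdot (lei A)) (boxdot (lei B))) (Or (boxt A) (boxt B)))).
      { apply imp_from. eapply or_e. apply h0.
        - apply or_1. eapply and_1. eapply app. apply (iff1 _ _ B1). apply h0.
        - apply or_2. eapply and_1. eapply app. apply (iff1 _ _ C1). apply h0. }
      assert (U : LLe_plus (Imp (Or (boxt A) (boxt B)) (Or (boxdot (lei A)) (boxdot (lei B))))).
      { apply imp_from. eapply or_e. apply h0.
        - apply or_1. eapply app. apply (iff2 _ _ B1). eapply bd; eapply h0.
        - apply or_2. eapply app. apply (iff2 _ _ C1). eapply bd; eapply h0. }
      apply iff_from.
      * apply and_i. eapply app. apply T. eapply and_1; eapply h0. eapply boxmono. apply T. eapply and_2; eapply h0.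
      * apply and_i. eapply app. apply U. eapply and_1; eapply h0. eapply boxmono. apply U. eapply and_2; eapply h0.
    + apply imp_from. eapply or_e. apply h0.
      apply or_1. eapply app. apply B2. apply h0.
      apply or_2. eapply app. apply C2. apply h0.
    + intro Hn. apply andb_prop in Hn. destruct Hn as [Ha Hb].
      specialize (B3 Ha). specialize (C3 Hb). apply iff_from.
      * eapply or_e. apply h0.
        apply or_1. eapply app. apply (iff1 _ _ B3). apply h0.
        apply or_2. eapply app. apply (iff1 _ _ C3). apply h0.
      * eapply or_e. apply h0.
        apply or_1. eapply app. apply (iff2 _ _ B3). apply h0.
        apply or_2. eapply app. apply (iff2 _ _ C3). apply h0.
  - destruct IHTNNIL as (B1 & B2 & B3). pose proof (L4 _ B1 B2) as B4.
    simpl. split; [|split].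
    + apply iff_from.
      * apply and_i. eapply app. apply (iff1 _ _ B4). eapply and_1; eapply h0.
        eapply boxmono. apply (iff1 _ _ B4). eapply and_2; eapply h0.
      * apply and_i. eapply app. apply (iff2 _ _ B4). eapply and_1; eapply h0.
        eapply boxmono. apply (iff2 _ _ B4). eapply and_2; eapply h0.
    + apply imp_from. eapply boxmono. apply B2. apply h0.
    + intros _. apply iff_from. eapply boxmono. apply B2. apply h0.
      eapply app. apply (iff1 _ _ B4). apply h0.
  - destruct IHTNNIL1 as (B1 & B2 & B3). destruct IHTNNIL2 as (C1 & C2 & C3).
    specialize (B3 H1).
    simpl. rewrite H1. split; [|split].
    + assert (T1 : LLe_plus (Imp (Imp (boxt A) (boxt B)) (Imp A (lei B)))).
      { apply imp_from. apply deduction. eapply and_1. eapply app. apply (iff2 _ _ C1).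
        apply bd. eapply d_mp. apply h1. eapply app. apply (iff2 _ _ B3). apply h0. }
      assert (T2 : LLe_plus (Imp (boxdot (Imp A (lei B))) (Imp (boxt A) (boxt B)))).
      { apply imp_from. apply deduction.
        assert (HA : Der [boxt A; boxdot (Imp A (lei B))] A) by (eapply app; [apply B2|apply h0]).
        assert (HbA : Der [boxt A; boxdot (Imp A (lei B))] (Box A)).
        { eapply boxmono. apply B2. eapply app. apply boxt_box. apply h0. }
        eapply and_1. eapply app. apply (iff1 _ _ C1). apply and_i.
        eapply d_mp. eapply and_1; eapply h1. exact HA.
        eapply d_mp. eapply app. apply ax_K. eapply and_2; eapply h1. exact HbA. }
      apply iff_from.
      * apply (bd _ (Imp A B)). simpl. apply and_i. eapply app. apply T2. apply h0.
        eapply boxmono. apply T2. apply box_and. eapply and_2; eapply h0. eapply four; eapply and_2; eapply h0.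
      * apply and_i. eapply app. apply T1. eapply and_1; eapply and_1; eapply h0.
        eapply boxmono. apply T1. eapply and_2; eapply and_1; eapply h0.
    + apply imp_from. apply deduction. eapply app. apply C2.
      eapply d_mp. eapply and_1; eapply h1. eapply app. apply (iff2 _ _ B3). apply h0.
    + simpl. discriminate.
Qed.

Theorem lemma4p21 : forall A : form, TNNIL A ->
  LLe_plus (Iff (boxdot (lei A)) (boxdot (boxt A))) /\
  LLe_plus (Imp (boxt A) A) /\
  (noi A = true -> LLe_plus (Iff (boxt A) A)) /\
  LLe_plus (Iff (Box A) (Box (boxt A))).
Proof.
  intros A H. destruct (main A H) as (a & b & c). repeat split; auto.
  apply L4; auto.
Qed.
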